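(* Let $k\ge0$, $n\ge k+4$ and let $Z$ be a positive $n\times(k+4)$ matrix. Then there is an open neighborhood $B\subset\mathrm{Gr}_{k,n;1}$ of $\mathrm{Gr}^{\ge}_{k,n;1}$ such that the formula $(U,W)\mapsto(UZ,WZ)$ defines a smooth submersion $B\to\mathrm{Gr}_{k,k+4;1}$, extending the amplituhedron map on $\mathrm{Gr}^{\ge}_{k,n;1}$.
   Context: For $m\ge k+2$, $\mathrm{Gr}_{k,m;1}$ denotes the two-step flag variety of pairs $(U,W)$ of subspaces $U\subset W\subset\mathbb{R}^m$ with $\dim U=k$, $\dim W=k+2$. A representative of $(U,W)\in\mathrm{Gr}_{k,n;1}$ is a pair $(C;D)$ with $C$ a $k\times n$ matrix with row span $U$ and $D$ a $2\times n$ matrix such that rows of $C$ and $D$ together span $W$; $[D;C]$ is the $(k+2)\times n$ matrix with the rows of $D$ above those of $C$. $\mathrm{Gr}^{\ge}_{k,n;1}$ is the set of $(U,W)$ having a representative with all maximal minors of $C$ and of $[D;C]$ nonnegative. $Z$ positive means all maximal minors of the $n\times(k+4)$ matrix $Z$ are positive. Here $UZ=\{uZ: u\in U\}$ and similarly for $WZ$. *)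

(* Defs.v *)
From HB Require Import structures.
From mathcomp Require Import all_boot all_order all_algebra.
From mathcomp Require Import all_classical all_reals all_analysis.
Set Implicit Arguments. Unset Strict Implicit. Unset Printing Implicit Defensive.
Import Order.TTheory GRing.Theory Num.Theory.
Import numFieldNormedType.Exports.
Local Open Scope classical_set_scope.
Local Open Scope ring_scope.

(* Strictly increasing maps of ordinals = subsets of columns/rows in order. *)
Definition incr (a b : nat) (f : 'I_a -> 'I_b) : Prop :=
  forall i j : 'I_a, (i < j)%N -> (f i < f j)%N.

Definition maxminors_nonneg (R : realType) (p n : nat) (A : 'M[R]_(p, n)) : Prop :=
  forall f : 'I_p -> 'I_n, incr f -> 0 <= \det (colsub f A).

Definition positive_mat (R : realType) (n m : nat) (Z : 'M[R]_(n, m)) : Prop :=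
  forall f : 'I_m -> 'I_n, incr f -> 0 < \det (rowsub f Z).

(* A point of Gr_{k,n;1} is represented by the (2+k) x n matrix [D;C] = col_mx D C
   of full rank 2+k (then C has full rank k); U = rowspan C, W = rowspan [D;C]. *)
Definition flag_rep (R : realType) (k n : nat) (M : 'M[R]_(2 + k, n)) : Prop :=
  \rank M = (2 + k)%N.

(* Two representatives define the same flag iff they differ by left multiplication
   by an invertible g whose lower-left k x 2 block vanishes (the parabolic group P). *)
Definition parabolic (R : realType) (k : nat) (g : 'M[R]_(2 + k)) : Prop :=
  dlsubmx g = 0.

(* Gr^{>=}_{k,n;1}, on representatives: some representative (C;D) has all maximal
   minors of C and of [D;C] nonnegative. *)
Definition nonneg_rep (R : realType) (k n : nat) (M : 'M[R]_(2 + k, n)) : Prop :=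
  flag_rep M /\ maxminors_nonneg (dsubmx M) /\ maxminors_nonneg M.

(* Subsets of Gr_{k,n;1} correspond to P-invariant sets of representatives;
   such a set is open in Gr (quotient topology) iff it is open in the space of
   matrices. *)
Definition P_invariant (R : realType) (k n : nat) (S : set 'M[R]_(2 + k, n)) : Prop :=
  forall M g, S M -> g \in unitmx -> parabolic g -> S (g *m M).

(* Main.v *)
Require Import Defs.
From HB Require Import structures.
From mathcomp Require Import all_boot all_order all_algebra.
From mathcomp Require Import all_classical all_reals all_analysis.
From mathcomp Require Import all_fingroup zify.
Import Order.TTheory GRing.Theory Num.Theory.
Import numFieldNormedType.Exports.
Local Open Scope classical_set_scope.
Local Open Scope ring_scope.

Module Aux.
Local Close Scope classical_set_scope.
Set Implicit Arguments. Unset Strict Implicit. Unset Printing Implicit Defensive.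
Lemma sorted_enumS n (S : {set 'I_n}) : sorted (fun a b : 'I_n => (a < b)%N) (enum S).
Proof.
rewrite /enum_mem; apply: sorted_filter.
  by move=> a b c; apply: ltn_trans.
rewrite -(@enumT 'I_n).
have := iota_ltn_sorted 0 n; rewrite -val_enum_ord sorted_map.
by [].
Qed.

Definition fS n (x0 : 'I_n) q (S : {set 'I_n}) : 'I_q -> 'I_n :=
  fun i => nth x0 (enum S) i.
Arguments fS {n} x0 q S _.

Section CB.
Variable R : comNzRingType.


Lemma det_expand q n (A : 'M[R]_(q, n)) (B : 'M[R]_(n, q)) :
  \det (A *m B) = \sum_(phi : ('I_n ^ q)%type)
     (\prod_i A i (phi i)) * \det (rowsub phi B).
Proof.
transitivity (\sum_(s : 'S_q) (-1) ^+ s * \sum_(phi : ('I_n ^ q)%type)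
     \prod_i (A i (phi i) * B (phi i) (s i))).
  apply: eq_bigr => s _; congr (_ * _).
  rewrite -(bigA_distr_bigA (fun i j => A i j * B j (s i))) /=.
  by apply: eq_bigr => i _; rewrite mxE.

under eq_bigr do rewrite big_distrr /=.
rewrite exchange_big /=; apply: eq_bigr => phi _.
rewrite /(\det _) big_distrr /=; apply: eq_bigr => s _.
rewrite big_split /= mulrCA; congr (_ * (_ * _)).
by apply: eq_bigr => i _; rewrite mxE.
Qed.

Lemma det_rowsub_perm q n (f : 'I_q -> 'I_n) (s : 'S_q) (B : 'M[R]_(n, q)) :
  \det (rowsub (fun i => f (s i)) B) = (-1) ^+ s * \det (rowsub f B).
Proof.
have -> : rowsub (fun i => f (s i)) B = row_perm s (rowsub f B).
  by apply/matrixP => i j; rewrite !mxE.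
by rewrite row_permE det_mulmx det_perm.
Qed.


Lemma CB q n (x0 : 'I_n) (A : 'M[R]_(q, n)) (B : 'M[R]_(n, q)) :
  \det (A *m B) = \sum_(S : {set 'I_n} | #|S| == q)
     \det (colsub (fS x0 q S) A) * \det (rowsub (fS x0 q S) B).
Proof.
rewrite det_expand.
rewrite (partition_big (fun phi : ('I_n ^ q)%type => [set phi i | i in [set: 'I_q]]) xpredT) //=.
rewrite (bigID (fun S : {set 'I_n} => #|S| == q)) /= [X in _ + X]big1 ?addr0; last first.
  move=> S /negbTE hS; apply: big1 => phi /eqP hphi.
  have : ~~ injectiveb phi.
    apply/negP => /injectiveP inj.
    by move: hS; rewrite -hphi card_imset // cardsT card_ord eqxx.
  case/injectivePn => i1 [i2 ne e].
  by rewrite (determinant_alternate ne) ?mulr0 // => j; rewrite !mxE e.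
apply: eq_bigr => S /eqP cS.
set f := fS x0 q S.
have sz : size (enum S) = q by rewrite -cardE.
have fS_in i : f i \in S by rewrite -mem_enum; apply: mem_nth; rewrite sz.
have finj : injective f.
  by move=> i j /eqP; rewrite nth_uniq ?sz ?enum_uniq // => /eqP; apply: val_inj.
pose h := fun s : 'S_q => [ffun i => f (s i)].
pose h' := fun phi : ('I_n ^ q)%type =>
  insubd (1%g : 'S_q) [ffun i => (insubd i (index (phi i) (enum S)) : 'I_q)].
rewrite (reindex_onto h h'); last first.
  move=> phi /eqP hphi.
  have phiS i : phi i \in S by rewrite -hphi; apply: imset_f.
  have injphi : injective phi.
    move=> i j; have /imset_injP : #|[set phi i | i in [set: 'I_q]]| == #|[set: 'I_q]|.
      by rewrite hphi cardsT card_ord cS.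
    by move=> H; apply: H; rewrite inE.
  pose g := [ffun i => (insubd i (index (phi i) (enum S)) : 'I_q)].
  have gE i : val (g i) = index (phi i) (enum S).
    rewrite ffunE val_insubd.
    have -> : (index (phi i) (enum S) < q)%N by rewrite -[X in (_ < X)%N]sz index_mem mem_enum phiS.
    by [].
  have fg i : f (g i) = phi i by rewrite /f /fS gE nth_index // mem_enum.
  have ginj : injectiveb g.
    by apply/injectiveP => i j e; apply: injphi; rewrite -fg e fg.
  apply/ffunP => i; rewrite ffunE /h' -pvalE insubdK //.
rewrite big_distrl /=.
apply: eq_big => [s | s _].
  have key i : (insubd i (index (f (s i)) (enum S)) : 'I_q) = s i.
    by apply: val_inj; rewrite val_insubd /f /fS index_uniq ?sz ?enum_uniq // ltn_ord.
  apply/andP; split.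
    rewrite eqEcard; apply/andP; split.
      by apply/fintype.subsetP => x /imsetP [i _ ->]; rewrite ffunE fS_in.
    rewrite card_imset ?cardsT ?card_ord ?cS //.
    by move=> i j; rewrite !ffunE => /finj /perm_inj.
  apply/eqP/permP => i; rewrite -pvalE insubdK.
    by rewrite !ffunE key.
  by apply/injectiveP => i1 j1; rewrite !ffunE !key => /perm_inj.
transitivity (\prod_i A i (f (s i)) * \det (rowsub (fun i => f (s i)) B)).
  congr (_ * _); first by apply: eq_bigr => i _; rewrite ffunE.
  by congr (\det _); apply/matrixP => i j; rewrite !mxE ffunE.
rewrite det_rowsub_perm mulrA; congr (_ * _).
rewrite mulrC; congr (_ * _); apply: eq_bigr => i _; by rewrite !mxE.
Qed.

End CB.

Lemma fS_incr n (x0 : 'I_n) q (S : {set 'I_n}) : #|S| = q -> incr (fS x0 q S).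
Proof.
move=> cS i j lt.
have sz : size (enum S) = q by rewrite -cardE.
have tr : transitive (fun a b : 'I_n => (a < b)%N) by move=> a b c; apply: ltn_trans.
by apply: (sorted_ltn_nth tr x0 (sorted_enumS S)) => //; rewrite inE sz ltn_ord.
Qed.

Lemma incr_ge m n (f : 'I_m -> 'I_n) : incr f -> forall i : 'I_m, (i <= f i)%N.
Proof.
move=> fi; suff H : forall t (i : 'I_m), val i = t -> (t <= f i)%N.
  by move=> i; apply: H.
elim => [|t IH] i ei //.
have ht : (t < m)%N by move: (ltn_ord i); rewrite -[nat_of_ord i]/(val i) ei; lia.
have := IH (Ordinal ht) erefl.
have := fi (Ordinal ht) i; rewrite ei /= => /(_ (ltnSn t)).
lia.
Qed.

Lemma incr_inj m n (f : 'I_m -> 'I_n) : incr f -> injective f.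
Proof.
move=> fi i j e; apply/val_inj/eqP; case: (ltngtP i j) => // h.
  by have := fi _ _ h; rewrite e ltnn.
by have := fi _ _ h; rewrite e ltnn.
Qed.

Lemma incr_lift m n (f : 'I_m.+1 -> 'I_n) r : incr f -> incr (fun i => f (lift r i)).
Proof.
move=> fi [i hi] [j hj] /= lt; apply: fi; rewrite /= /bump.
by case: (leqP r i) => h1; case: (leqP r j) => h2 /=; lia.
Qed.

Lemma card_lt n b : (b <= n)%N -> #|[set c : 'I_n | (c < b)%N]| = b.
Proof.
move=> hb.
have -> : [set c : 'I_n | (c < b)%N] = (widen_ord hb) @: [set: 'I_b].
  apply/setP => c; rewrite inE; apply/idP/imsetP.
    by move=> h; exists (Ordinal h) => //; apply: val_inj.
  by case=> x _ ->; rewrite /= ltn_ord.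
rewrite card_imset ?cardsT ?card_ord //.
by move=> x y /(congr1 val) /= /val_inj.
Qed.

Section Real.
Variable R : realType.

Lemma exists_nz_minor q n (x0 : 'I_n) (M : 'M[R]_(q, n)) : \rank M = q ->
  exists S : {set 'I_n}, #|S| = q /\ \det (colsub (fS x0 q S) M) != 0.
Proof.
move=> hM.
have : row_full M^T by rewrite /row_full mxrank_tr hM.
case/row_fullP => X hX.
have e : M *m X^T = 1%:M by rewrite -(trmxK (M *m X^T)) trmx_mul trmxK hX trmx1.
have := CB x0 M X^T; rewrite e det1.
case: (pickP (fun S : {set 'I_n} => (#|S| == q) && (\det (colsub (fS x0 q S) M) != 0))).
  by move=> S /andP [/eqP h1 h2] _; exists S.
move=> H; rewrite big1 => [|S /eqP cS]; first by move/eqP; rewrite oner_eq0.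
by have := H S; rewrite cS eqxx /= => /negbFE/eqP ->; rewrite mul0r.
Qed.


Lemma extend q n (M : 'M[R]_(q, n)) : (q < n)%N -> maxminors_nonneg M -> \rank M = q ->
  exists e : 'rV[R]_n, maxminors_nonneg (col_mx e M) /\ \rank (col_mx e M) = q.+1.
Proof.
move=> hqn tnn hM.
have x0 : 'I_n := Ordinal (leq_ltn_trans (leq0n q) hqn).
case: (exists_nz_minor x0 hM) => S [cS nzS].
set h0 := fS x0 q S.
have h0i : incr h0 := fS_incr x0 cS.
pose P (b : nat) := [exists h : ('I_n ^ q)%type, [&& [forall i : 'I_q, forall j : 'I_q, (i < j)%N ==> (h i < h j)%N],
   \det (colsub h M) != 0 & [forall i : 'I_q, val (h i) != b]]].
have PE b : P b <-> exists h : 'I_q -> 'I_n, [/\ incr h, \det (colsub h M) != 0 & forall i, val (h i) != b].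
  split.
    case/existsP => h /and3P [/forallP H1 H2 /forallP H3]; exists h; split => //.
    by move=> i j lt; move: (H1 i) => /forallP /(_ j) /implyP; apply.
  case => h [hi hd hb]; apply/existsP; exists [ffun i => h i]; apply/and3P; split.
  - by apply/forallP => i; apply/forallP => j; apply/implyP => lt; rewrite !ffunE; exact: hi.
  - have -> : colsub [ffun i => h i] M = colsub h M by apply/matrixP => a c; rewrite !mxE ffunE.
    done.
  - by apply/forallP => i; rewrite ffunE; exact: hb i.
have [c Pc] : exists c : 'I_n, P c.
  have : ~~ ([set: 'I_n] \subset h0 @: [set: 'I_q]).
    apply/negP => /subset_leq_card; rewrite cardsT card_ord.
    have := leq_imset_card h0 [set: 'I_q]; rewrite cardsT card_ord.
    by move=> a1 a2; have := leq_trans a2 a1; rewrite leqNgt hqn.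
  case/fintype.subsetPn => c _ cn.
  exists c; apply/PE; exists h0; split => // i; apply/eqP => e.
  apply: (negP cn); have -> : c = h0 i by apply/val_inj; rewrite e.
  by apply: imset_f; rewrite inE.
have exP : exists b, P b by exists (val c).
have [b Pb bmin] := ex_minnP exP.
have bn : (b < n)%N by apply: (leq_ltn_trans (bmin _ Pc)).
case/PE: Pb => h1 [h1i h1d h1b].
pose bo := Ordinal bn.
pose e : 'rV[R]_n := (-1) ^+ b *: delta_mx ord0 bo.
have eE i j : e i j = (-1) ^+ b * (j == bo)%:R by rewrite !mxE ord1 eqxx.
exists e; split.
  move=> f fi.
  rewrite (expand_det_row _ ord0).
  have Nrow0 j : colsub f (col_mx e M) ord0 j = e ord0 (f j).
    rewrite mxE; have -> : (ord0 : 'I_(1 + q)) = lshift q ord0 by apply: val_inj.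
    by rewrite col_mxEu.
  case: (pickP (fun r => f r == bo)) => [r /eqP fr | nob]; last first.
    rewrite big1 ?lexx // => j _; rewrite Nrow0 eE.
    by have := nob j; rewrite /= => ->; rewrite mulr0 mul0r.
  rewrite (bigD1 r) //= big1 ?addr0; last first.
    move=> j ne; rewrite Nrow0 eE; have -> : (f j == bo) = false.
      apply/negbTE; rewrite -fr; apply: contra ne => /eqP/(incr_inj fi) ->.
      by [].
    by rewrite mulr0 mul0r.
  rewrite Nrow0 eE fr eqxx mulr1 /cofactor.
  have minor : row' ord0 (col' r (colsub f (col_mx e M))) = colsub (fun i => f (lift r i)) M.
    apply/matrixP => i j; rewrite [LHS]mxE [LHS]mxE [LHS]mxE [RHS]mxE.
    have -> : lift ord0 i = rshift 1 i by apply: val_inj.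
    by rewrite col_mxEd.
  rewrite minor.
  set g := fun i => f (lift r i).
  have gi : incr g := incr_lift r fi.
  have dg := tnn g gi.
  case: (eqVneq (\det (colsub g M)) 0) => [->|nz]; first by rewrite !mulr0.
  have cimg (c' : 'I_n) : (c' < b)%N -> exists j, g j = c'.
    move=> cb; case: (pickP (fun j => g j == c')) => [j /eqP gj | none]; first by exists j.
    have : P c'.
      apply/PE; exists g; split => // i.
      by apply: (contraFN _ (none i)) => /eqP e'; apply/eqP/val_inj.
    by move/bmin; lia.
  have rb : val r = b.
    have h1' : (r <= b)%N by have := incr_ge fi r; rewrite fr.
    have h2' : (b <= r)%N.
      have sub : [set c' : 'I_n | (c' < b)%N] \subset f @: [set j : 'I_(1 + q) | (j < r)%N].
        apply/fintype.subsetP => c'; rewrite inE => cb.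
        case: (cimg c' cb) => j gj; apply/imsetP; exists (lift r j) => //.
        rewrite inE; case: (ltngtP (lift r j) r) => // H.
          have := fi _ _ H; rewrite /g in gj; rewrite gj fr /=; lia.
        by have := neq_lift r j; rewrite (val_inj H) eqxx.
      have := subset_leq_card sub; rewrite card_lt ?(ltnW bn) //.
      have := leq_imset_card f [set j : 'I_(1 + q) | (j < r)%N].
      rewrite card_lt ?(ltnW (ltn_ord r)) //; lia.
    by apply/eqP; rewrite eqn_leq h1' h2'.
  have -> : (-1) ^+ b * ((-1) ^+ (@nat_of_ord (1 + q) ord0 + r)%N * \det (colsub g M)) = \det (colsub g M).
    by rewrite /= add0n rb mulrA -exprD -signr_odd oddD addbb expr0 mul1r.
  exact: dg.
suff : row_free (col_mx e M) by move/eqP.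
have key (y : 'rV[R]_(1 + q)) : y *m col_mx e M = 0 -> y = 0.
  move=> hy; rewrite -[y]hsubmxK in hy *; rewrite mul_row_col in hy.
  set y0 := lsubmx y in hy *; set y' := rsubmx y in hy *.
  have c1 : colsub h1 e = 0.
    apply/matrixP => i j; rewrite !mxE.
    have -> : (h1 j == bo) = false by apply/negbTE; apply: contra (h1b j) => /eqP ->.
    by rewrite andbF mulr0.
  have H : y0 *m colsub h1 e + y' *m colsub h1 M = colsub h1 (y0 *m e + y' *m M).
    by rewrite !mulmx_colsub; apply/matrixP => a c'; rewrite !mxE.
  rewrite hy c1 mulmx0 add0r in H.
  have H0 : y' *m colsub h1 M = 0 by rewrite H; apply/matrixP => a c'; rewrite !mxE.
  have u : colsub h1 M \in unitmx by rewrite unitmxE unitfE.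
  have y'0 : y' = 0 by rewrite -(mulmxK u y') H0 mul0mx.
  rewrite y'0 mul0mx addr0 in hy.
  have y00 : y0 = 0.
    have := congr1 (fun X : 'M[R]_(1, n) => X ord0 bo) hy; rewrite !mxE big_ord1 eE eqxx mulr1.
    move/eqP; rewrite mulf_eq0 signr_eq0 orbF => /eqP y0e.
    by apply/matrixP => a a'; rewrite !ord1 y0e mxE.
  by rewrite y'0 y00 row_mx0.
rewrite -kermx_eq0; apply/eqP/row_matrixP => i; rewrite row0.
by apply: key; apply/sub_kermxP; exact: row_sub.
Qed.


Lemma pos_det q n (x0 : 'I_n) (N : 'M[R]_(q, n)) (Z : 'M[R]_(n, q)) :
  maxminors_nonneg N -> \rank N = q -> positive_mat Z -> 0 < \det (N *m Z).
Proof.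
move=> tnn hN hZ.
case: (exists_nz_minor x0 hN) => S [cS nz].
rewrite (CB x0) (bigD1 S) ?cS ?eqxx //=.
apply: ltr_wpDr.
  apply: sumr_ge0 => T /andP [/eqP cT _]; apply: mulr_ge0.
    exact: tnn _ (fS_incr x0 cT).
  exact/ltW/hZ/(fS_incr x0 cT).
apply: mulr_gt0; last exact: hZ _ (fS_incr x0 cS).
by rewrite lt_neqAle eq_sym nz (tnn _ (fS_incr x0 cS)).
Qed.

Lemma rank_col_le m1 m2 p (A : 'M[R]_(m1, p)) (B : 'M[R]_(m2, p)) :
  (\rank (col_mx A B) <= \rank A + \rank B)%N.
Proof. by rewrite -addsmxE; exact: (mxrank_adds_leqif A B).1. Qed.

Lemma rank_MZ q n (M : 'M[R]_(q, n)) (Z : 'M[R]_(n, q.+2)) : (q.+2 <= n)%N ->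
  maxminors_nonneg M -> \rank M = q -> positive_mat Z -> \rank (M *m Z) = q.
Proof.
move=> hn tnn hM hZ.
have x0 : 'I_n := Ordinal (leq_trans (ltn0Sn q.+1) hn).
case: (extend (ltnW hn) tnn hM) => e1 [tnn1 hM1].
case: (extend hn tnn1 hM1) => e2 [tnn2 hM2].
have := pos_det x0 tnn2 hM2 hZ => /lt0r_neq0 nz.
have u : (col_mx e2 (col_mx e1 M) *m Z) \in unitmx by rewrite unitmxE unitfE.
have := mxrank_unit u; rewrite !mul_col_mx => r2.
have h2 := rank_col_le (e2 *m Z) (col_mx (e1 *m Z) (M *m Z)); rewrite r2 in h2.
have h1 := rank_col_le (e1 *m Z) (M *m Z).
apply/eqP; rewrite eqn_leq rank_leq_row /=.
have h3 : (q.+2 <= 1 + (1 + \rank (M *m Z)))%N.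
  apply: (leq_trans h2); apply: leq_add; first exact: rank_leq_row.
  apply: (leq_trans h1); apply: leq_add; first exact: rank_leq_row.
  exact: leqnn.
by rewrite !add1n !ltnS in h3.
Qed.

End Real.

Section Topo.
Variable R : realType.

Lemma cont_entry (T : topologicalType) m n (f : T -> 'M[R]_(m, n)) :
  (forall i j, continuous (fun x => f x i j)) -> continuous f.
Proof.
move=> fc x A [P hP sPA].
apply: (filterS (fun y Py => sPA (f y) Py)).
apply: filter_forall => i; apply: filter_forall => j.
exact: (fc i j x _ (hP i j)).
Qed.

Lemma cont_sum (T : topologicalType) (I : finType) (F : I -> T -> R) :
  (forall i, continuous (F i)) -> continuous (fun x => \sum_i F i x).
Proof.
move=> h; apply: (@continuous_big _ _ +%R 0 xpredT) => //.
exact: add_continuous.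
Qed.

Lemma cont_prod (T : topologicalType) (I : finType) (F : I -> T -> R) :
  (forall i, continuous (F i)) -> continuous (fun x => \prod_i F i x).
Proof.
move=> h; exact: (@continuous_big R I (@GRing.mul R) 1 xpredT (@mul_continuous R) T (index_enum I) F).
Qed.

Lemma cont_mulmx p q m (Z : 'M[R]_(q, m)) :
  continuous (fun N : 'M[R]_(p, q) => N *m Z).
Proof.
apply: cont_entry => i j.
have -> : (fun N : 'M[R]_(p, q) => (N *m Z) i j) = (fun N => \sum_l N i l * Z l j).
  by apply: funext => N; rewrite mxE.
apply: cont_sum => l x.
exact: (@continuousM R _ (fun N : 'M[R]_(p, q) => N i l) (fun _ => Z l j) x (@coord_continuous R p q i l x) (@cst_continuous _ _ (Z l j) x)).
Qed.

Lemma cont_det p q (F : 'M[R]_(p, q) -> 'M[R]_p) : continuous F ->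
  continuous (fun N => \det (F N)).
Proof.
move=> Fc.
have -> : (fun N => \det (F N)) = (fun N => \sum_(s : 'S_p) ((-1) ^+ s * \prod_i F N i (s i))).
  by apply: funext => N.
apply: cont_sum => s x.
have ct : {for x, continuous (fun N => \prod_i F N i (s i))}.
  apply: cont_prod => i y.
  apply: (@continuous_comp _ _ _ F (fun A : 'M[R]_p => A i (s i))); first exact: Fc.
  exact: coord_continuous.
exact: (@continuousM R _ (fun _ => (-1) ^+ s) (fun N => \prod_i F N i (s i)) x (@cst_continuous _ _ ((-1) ^+ s : R) x) ct).
Qed.

End Topo.

End Aux.
Import Aux.

Theorem mainTheorem3 (R : realType) (k n : nat) (hn : (k + 4 <= n)%N)
    (Z : 'M[R]_(n, k + 4)) (hZ : positive_mat Z) :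
  exists B : set 'M[R]_(2 + k, n),
    [/\ (* B is a subset of Gr_{k,n;1}, open, given by a P-invariant set *)
        [/\ B `<=` [set M | flag_rep M], open B & P_invariant B],
        (* B contains Gr^{>=}_{k,n;1} *)
        [set M | nonneg_rep M] `<=` B,
        (* (U,W) |-> (UZ,WZ) is well defined B -> Gr_{k,k+4;1} *)
        (forall M, B M -> flag_rep (M *m Z)) &
        (* submersion: at every point the differential of the lifted map
           M |-> MZ, together with the tangent space of the P-orbit of MZ,
           spans the whole tangent space of the representative space *)
        (forall M, B M ->
           differentiable (fun N : 'M[R]_(2 + k, n) => N *m Z) M /\
           forall Y : 'M[R]_(2 + k, k + 4), exists (X : 'M[R]_(2 + k, n))
             (g : 'M[R]_(2 + k)), parabolic g /\
             Y = 'd (fun N : 'M[R]_(2 + k, n) => N *m Z) M X + g *m (M *m Z))].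
Proof.
have e4 : (k + 4 = (2 + k).+2)%N by rewrite addnC.
rewrite e4 in hn; move: Z hZ; rewrite e4 => Z hZ.
pose B : set 'M[R]_(2 + k, n) :=
  [set M | exists f : 'I_(2 + k) -> 'I_(2 + k).+2, \det (colsub f (M *m Z)) != 0].
exists B; split.
- split.
  + move=> M [f hf]; rewrite /flag_rep /=.
    have u : (M *m colsub f Z) \in unitmx by rewrite unitmxE unitfE mulmx_colsub.
    have r := mxrank_unit u.
    apply/eqP; rewrite eqn_leq rank_leq_row /= -{1}r; exact: mxrankM_maxl.
  + rewrite openE => M [f hf].
    have op : open ((fun N => \det (colsub f (N *m Z))) @^-1` [set x | x != 0]).
      apply: open_comp; last exact: open_neq.
      move=> N _.
      have -> : (fun N => \det (colsub f (N *m Z))) = (fun N => \det (N *m colsub f Z)).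
        by apply: funext => N'; rewrite mulmx_colsub.
      by apply: cont_det; apply: cont_mulmx.
    move: op; rewrite openE => /(_ M hf).
    by apply: filterS => N hN; exists f.
  + move=> M g [f hf] gu pg; exists f.
    rewrite -mulmxA -mulmx_colsub det_mulmx mulf_neq0 //.
    by rewrite -unitfE -unitmxE.
- move=> M [fr [_ tnn]].
  have r := rank_MZ hn tnn fr hZ.
  case: (exists_nz_minor (ord0 : 'I_(2 + k).+2) r) => S [_ nz].
  by exists (fS ord0 (2 + k) S).
- move=> M [f hf]; rewrite /flag_rep.
  have u : colsub f (M *m Z) \in unitmx by rewrite unitmxE unitfE.
  have r := mxrank_unit u.
  apply/eqP; rewrite eqn_leq rank_leq_row /= -{1}r.
  have -> : colsub f (M *m Z) = (M *m Z) *m colsub f 1%:M by rewrite mulmx_colsub mulmx1.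
  exact: mxrankM_maxl.
- move=> M _.
  have lin : (fun N : 'M[R]_(2 + k, n) => N *m Z) = mulmxr Z by [].
  rewrite lin; split.
    by apply: linear_differentiable; apply: cont_mulmx.
  move=> Y.
  pose w := fun i : 'I_(2 + k).+2 => widen_ord hn i.
  have wi : incr w by [].
  have Wu : rowsub w Z \in unitmx by rewrite unitmxE unitfE; apply: lt0r_neq0 (hZ w wi).
  pose L := invmx (rowsub w Z) *m rowsub w 1%:M.
  have LZ : L *m Z = 1%:M by rewrite /L -mulmxA -rowsubE mulVmx.
  exists (Y *m L), 0; split.
    by apply/matrixP => i j; rewrite !mxE.
  rewrite diff_lin; last exact: cont_mulmx.
  by rewrite /= -mulmxA LZ mulmx1 mul0mx addr0.
Qed.
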